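(* Let $\lambda\in\hat U(N)$ be a signature and $q\in\mathbb{R}$. Then \[ m_{N,PP(q)}[\lambda]=\frac1N\sum_{i=1}^N\Big(\prod_{j\ne i}\frac{(\lambda_i-i)-(\lambda_j-j)-q}{(\lambda_i-i)-(\lambda_j-j)}\Big)\delta\Big(\frac{\lambda_i+N-i}{N}\Big) \] is a signed measure of total mass $1$, and for $q\in[-1,1]$ it is a probability measure.
   Context: A signature of length $N$ is a tuple $\lambda=(\lambda_1\ge\dots\ge\lambda_N)\in\mathbb{Z}^N$; $\hat U(N)$ is the set of such signatures. $\delta(x)$ denotes the Dirac measure at $x$. *)

(* Defs.v *)
From HB Require Import structures.
From mathcomp Require Import all_boot all_order all_algebra.
From mathcomp Require Import all_classical all_reals all_analysis.
Set Implicit Arguments. Unset Strict Implicit. Unset Printing Implicit Defensive.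
Import Order.TTheory GRing.Theory Num.Theory.
Import numFieldNormedType.Exports.
Local Open Scope classical_set_scope.
Local Open Scope ring_scope.

(* A signature of length N: lam : 'I_N -> int, non-increasing.
   Index i : 'I_N (0-based) corresponds to the paper's index i+1. *)
Definition is_signature (N : nat) (lam : 'I_N -> int) : Prop :=
  forall i j : 'I_N, (i <= j)%N -> lam j <= lam i.

Definition sig_shift (R : realType) (N : nat) (lam : 'I_N -> int) (i : 'I_N) : R :=
  (lam i)%:~R - (i.+1)%:R.

Definition pp_weight (R : realType) (N : nat) (lam : 'I_N -> int) (q : R)
    (i : 'I_N) : R :=
  \prod_(j < N | j != i)
     ((sig_shift R lam i - sig_shift R lam j - q) /
      (sig_shift R lam i - sig_shift R lam j)).

Definition pp_atom (R : realType) (N : nat) (lam : 'I_N -> int) (i : 'I_N) : R :=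
  ((lam i)%:~R + N%:R - (i.+1)%:R) / N%:R.

Definition mPP (R : realType) (N : nat) (lam : 'I_N -> int) (q : R)
    (A : set R) : \bar R :=
  (\sum_(i < N) ((N%:R^-1 * pp_weight lam q i)%:E * \d_(pp_atom R lam i) A))%E.

(* Main.v *)
Require Import Defs.
From HB Require Import structures.
From mathcomp Require Import all_boot all_order all_algebra.
From mathcomp Require Import all_classical all_reals all_analysis.
From mathcomp Require Import ring lra zify.
Import Order.TTheory GRing.Theory Num.Theory.
Import numFieldNormedType.Exports.
Local Open Scope classical_set_scope.
Local Open Scope ring_scope.

Section Alg.
Context (R : realFieldType) (I : eqType) (x : I -> R) (q : R) (xinj : injective x).

Definition ww (r : seq I) (i : I) : R :=
  \prod_(j <- r | j != i) ((x i - x j - q) / (x i - x j)).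

Lemma ww_cons a r i : uniq (a :: r) -> i \in r ->
  ww (a :: r) i = (x i - x a - q) / (x i - x a) * ww r i.
Proof.
move=> /andP[ar _] ir; rewrite /ww big_cons.
have -> : (a != i) by apply/eqP => E; rewrite E ir in ar.
by [].
Qed.

Lemma ww_head a r : uniq (a :: r) ->
  ww (a :: r) a = \prod_(j <- r) ((x a - x j - q) / (x a - x j)).
Proof.
move=> /andP[ar _]; rewrite /ww big_cons eqxx /=.
rewrite big_seq_cond [RHS]big_seq_cond; apply: eq_bigl => j.
case jr: (j \in r) => //=; apply/negP => /eqP E; by rewrite -E jr in ar.
Qed.

Lemma key r : uniq r -> forall z, (forall j, j \in r -> z != x j) ->
  \prod_(j <- r) ((z - x j - q) / (z - x j)) = 1 - q * \sum_(i <- r) ww r i / (z - x i).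
Proof.
elim: r => [|a r IH] ur z hz; first by rewrite !big_nil mulr0 subr0.
have ur' := ur; move: ur' => /andP[ar ur1].
rewrite big_cons (IH ur1 z) ?big_cons; last by move=> j jr; apply: hz; rewrite inE jr orbT.
rewrite ww_head // (IH ur1 (x a)); last first.
  by move=> j jr; apply/eqP => /xinj E; rewrite E jr in ar.
under eq_big_seq => i ir do rewrite ww_cons //.
have u0 : z - x a != 0 by rewrite subr_eq0; apply: hz; rewrite inE eqxx.
set S1 := \sum_(i <- r) ww r i / (z - x i).
set S2 := \sum_(i <- r) ww r i / (x a - x i).
set S3 := \sum_(i <- r) _.
have H : (- q * (z - x a - q) / (z - x a)) * S1 + (- q ^+ 2 / (z - x a)) * S2 + q * S3 = 0.
  rewrite /S1 /S2 /S3 !mulr_sumr -!big_split /=; rewrite big_seq big1 // => i ir.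
  have e0 : z - x i != 0 by rewrite subr_eq0; apply: hz; rewrite inE ir orbT.
  have d0 : x i - x a != 0 by rewrite subr_eq0; apply/eqP => /xinj E; rewrite -E ir in ar.
  have d1 : x a - x i != 0 by rewrite subr_eq0; apply/eqP => /xinj E; rewrite E ir in ar.
  have -> : z - x a = (z - x i) + (x i - x a) by ring.
  have -> : x a - x i = - (x i - x a) by ring.
  move: e0 d0 u0; set e := z - x i; set d := x i - x a => e0 d0 u0.
  have ed : e + d != 0 by rewrite /e /d; have -> : z - x i + (x i - x a) = z - x a by ring. 
  field; rewrite ed d0 e0 //.
apply/eqP; rewrite -subr_eq0; apply/eqP; rewrite -H; field; exact: u0.
Qed.

Lemma sumw r : uniq r -> \sum_(i <- r) ww r i = (size r)%:R.
Proof.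
elim: r => [|a r IH] ur; first by rewrite big_nil.
have ur' := ur; move: ur' => /andP[ar ur1].
rewrite big_cons ww_head // key //; last first.
  by move=> j jr; apply/eqP => /xinj E; rewrite E jr in ar.
under eq_big_seq => i ir do rewrite ww_cons //.
have -> : \sum_(i <- r) (x i - x a - q) / (x i - x a) * ww r i =
   \sum_(i <- r) ww r i + q * \sum_(i <- r) ww r i / (x a - x i).
  rewrite mulr_sumr -big_split /=; apply: eq_big_seq => i ir.
  have d0 : x i - x a != 0 by rewrite subr_eq0; apply/eqP => /xinj E; rewrite -E ir in ar.
  have -> : x a - x i = - (x i - x a) by ring.
  field; exact: d0.
rewrite IH // /= -addn1 natrD; ring.
Qed.
End Alg.
Arguments ww {R I}.
Arguments sumw {R I x q}.

Lemma charge_ex (R : realType) (I : Type) (r : seq I) (c a : I -> R) :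
  exists mu : {charge set R -> \bar R},
    forall A, mu A = (\sum_(i <- r) ((c i)%:E * \d_(a i) A))%E.
Proof.
elim: r => [|i r [mu Hmu]].
  by exists czero => A; rewrite big_nil.
exists (cadd (cscale (c i) (charge_of_finite_measure (@dirac _ R (a i) R))) mu).
by move=> A; rewrite big_cons -Hmu.
Qed.

Section ProbOf.
Context (R : realType) (nu : {charge set R -> \bar R})
  (nupos : forall E, (0 <= nu E)%E) (nu1 : nu setT = 1%E).
#[using="nu1"] Definition prob_of : set R -> \bar R := measure_of_charge nu nupos.
HB.instance Definition _ := Measure.on prob_of.
HB.instance Definition _ := Measure_isProbability.Build _ _ _ prob_of nu1.
End ProbOf.

Lemma size_ie N : size (index_enum 'I_N) = N.
Proof. by rewrite /index_enum unlock -enumT -cardT card_ord. Qed.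

Theorem mainTheorem3 (R : realType) (N : nat) (lam : 'I_N -> int) (q : R) :
  (0 < N)%N -> is_signature lam ->
  (exists mu : {charge set R -> \bar R},
      forall A : set R, measurable A -> mu A = mPP lam q A)
  /\ mPP lam q setT = 1%E
  /\ (-1 <= q <= 1 ->
      exists P : probability R R,
        forall A : set R, measurable A -> P A = mPP lam q A).
Proof.
move=> N0 hsig.
pose l (i : 'I_N) : int := lam i - (i.+1)%:Z.
have xl i : sig_shift R lam i = (l i)%:~R.
  by rewrite /sig_shift /l intrB.
have lt_l (i j : 'I_N) : (i < j)%N -> l j < l i.
  move=> ij; have := hsig i j (ltnW ij); rewrite /l; lia.
have linj : injective l.
  move=> i j E; apply/val_inj/eqP; case: (ltngtP i j) => // ij.
    by have := lt_l _ _ ij; rewrite E ltxx.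
  by have := lt_l _ _ ij; rewrite E ltxx.
have xinj : injective (sig_shift R lam).
  by move=> i j; rewrite !xl => /intr_inj /linj.
have wE i : pp_weight lam q i = ww (sig_shift R lam) q (index_enum 'I_N) i by [].
have sumw1 : \sum_(i < N) pp_weight lam q i = N%:R.
  by rewrite (sumw xinj _ (index_enum_uniq _)) size_ie.
have mass : mPP lam q setT = 1%E.
  rewrite /mPP; under eq_bigr do rewrite diracT mule1.
  rewrite sumEFin -mulr_sumr sumw1 mulVf //.
  by rewrite pnatr_eq0 -lt0n.
have [mu Hmu] := @charge_ex R _ (index_enum 'I_N)
   (fun i => N%:R^-1 * pp_weight lam q i) (pp_atom R lam).
split; first by exists mu => A _; rewrite Hmu.
split; first exact: mass.
move=> /andP[q1 q2].
have wpos i : 0 <= pp_weight lam q i.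
  rewrite /pp_weight; apply: prodr_ge0 => j ji.
  have ne : l i != l j by apply/eqP => /linj E; rewrite E eqxx in ji.
  rewrite !xl -intrB.
  set k := l i - l j.
  have : k != 0 by rewrite /k subr_eq0.
  case: (ltgtP k 0) => // hk _.
  - have k1 : (k%:~R : R) <= -1.
      have : k <= -1 by lia.
      by rewrite -(ler_int R) => /le_trans; apply; rewrite rmorphN /= rmorph1.
    apply: mulr_le0; first by lra.
    by rewrite invr_le0; lra.
  - have k1 : 1 <= (k%:~R : R).
      have : 1 <= k by lia.
      by rewrite -(ler_int R).
    apply: divr_ge0; lra.
have nupos : forall E, (0 <= mu E)%E.
  move=> E; rewrite Hmu; apply: sume_ge0 => i _; apply: mule_ge0.
    by rewrite lee_fin mulr_ge0 // invr_ge0 ler0n.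
  exact: measure_ge0.
have nu1 : mu setT = 1%E by rewrite Hmu.
exists (@prob_of R mu nupos nu1) => A _.
have -> : mPP lam q A = mu A by rewrite Hmu.
by [].
Qed.
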